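(* Let $X$ be a finite nonempty alphabet and $\mathcal{L}\subseteq 2^{X^*}$ a nontrivial, WP-recursive language family closed under finite unions, finite intersections and complementation. Let $C,A\subseteq X^*$ be recursive languages with $A$ infinite, $A\cap C=\emptyset$, and $A\notin\mathit{cclass}_1(C,\mathcal{L})$. Then there is a recursive language $B\subseteq A$ with $B\in\mathit{ccore}_1(C,\mathcal{L})$.
   Context: $\mathcal{L}$ is nontrivial if $\emptyset,X^*\in\mathcal{L}$ and for all $Q\in\mathcal{L}$ and finite $E\subseteq X^*$ both $Q\cup E\in\mathcal{L}$ and $Q\setminus E\in\mathcal{L}$. $\mathcal{L}$ is WP-recursive if there is a surjection $e:\mathbb{N}_0\to\mathcal{L}$ such that the predicate ''$w\in e(i)$'' (for $i\in\mathbb{N}_0$, $w\in X^*$) is decidable (uniformly in $i$ and $w$). For $C\subseteq X^*$ and an infinite $A\subseteq X^*\setminus C$: $A\in\mathit{cclass}_1(C,\mathcal{L})$ iff there is $Q\in\mathcal{L}$ with $X^*\setminus Q\in\mathcal{L}$, $C\subseteq Q$ and $A\subseteq X^*\setminus Q$; $B\in\mathit{ccore}_1(C,\mathcal{L})$ iff $B$ is an infinite subset of $X^*\setminus C$ and every infinite $B'\subseteq B$ satisfies $B'\notin\mathit{cclass}_1(C,\mathcal{L})$. *)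

(* Defs.v *)
From mathcomp Require Import all_boot.
Set Implicit Arguments. Unset Strict Implicit. Unset Printing Implicit Defensive.

Inductive rcode : Type :=
| RZero
| RSucc
| RProj of nat
| RComp of rcode & seq rcode
| RPrim of rcode & rcode         (* primitive recursion on the first argument *)
| RMu of rcode.

Inductive eval : rcode -> seq nat -> nat -> Prop :=
| ev_zero v : eval RZero v 0
| ev_succ v : eval RSucc v (head 0 v).+1
| ev_proj i v : eval (RProj i) v (nth 0 v i)
| ev_comp f gs v ys y : evals gs v ys -> eval f ys y -> eval (RComp f gs) v y
| ev_prim0 f g v y : eval f v y -> eval (RPrim f g) (0 :: v) y
| ev_primS f g n v z y :
    eval (RPrim f g) (n :: v) z -> eval g (n :: z :: v) y ->
    eval (RPrim f g) (n.+1 :: v) y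
| ev_mu f v n :
    eval f (n :: v) 0 ->
    (forall m, m < n -> exists2 k, eval f (m :: v) k & k <> 0) ->
    eval (RMu f) v n
with evals : seq rcode -> seq nat -> seq nat -> Prop :=
| evs_nil v : evals [::] v [::]
| evs_cons g gs v y ys : eval g v y -> evals gs v ys -> evals (g :: gs) v (y :: ys).

(* bijective base-#|X| numeration *)
Fixpoint wcode (X : finType) (w : seq X) : nat :=
  match w with
  | [::] => 0
  | x :: w' => (enum_rank x).+1 + #|X| * wcode w'
  end.

Definition lang (X : finType) := seq X -> bool.
Arguments lang : clear implicits.

Definition recursive (X : finType) (L : lang X) : Prop :=
  exists c : rcode, forall w : seq X, eval c [:: wcode w] (nat_of_bool (L w)).

Definition lang_finite (X : finType) (A : lang X) : Prop :=
  exists s : seq (seq X), forall w, A w -> w \in s.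
Definition lang_infinite (X : finType) (A : lang X) : Prop := ~ lang_finite A.

Definition lsubset (X : finType) (A B : lang X) : Prop := forall w, A w -> B w.
Definition lcompl (X : finType) (A : lang X) : lang X := fun w => ~~ A w.

Definition lfamily (X : finType) := lang X -> Prop.
Arguments lfamily : clear implicits.

Definition nontrivial (X : finType) (L : lfamily X) : Prop :=
  [/\ L (fun _ => false), L (fun _ => true) &
      forall Q, L Q -> forall E : seq (seq X),
        L (fun w => Q w || (w \in E)) /\ L (fun w => Q w && (w \notin E))].

Definition WP_recursive (X : finType) (L : lfamily X) : Prop :=
  exists e : nat -> lang X,
    (forall i, L (e i)) /\ (forall Q, L Q -> exists i, e i = Q) /\
    exists c : rcode, forall i (w : seq X), eval c [:: i; wcode w] (nat_of_bool (e i w)).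

Definition closed_union (X : finType) (L : lfamily X) : Prop :=
  forall Q1 Q2, L Q1 -> L Q2 -> L (fun w => Q1 w || Q2 w).
Definition closed_inter (X : finType) (L : lfamily X) : Prop :=
  forall Q1 Q2, L Q1 -> L Q2 -> L (fun w => Q1 w && Q2 w).
Definition closed_compl (X : finType) (L : lfamily X) : Prop :=
  forall Q, L Q -> L (lcompl Q).

Definition cclass1 (X : finType) (C : lang X) (L : lfamily X) (A : lang X) : Prop :=
  [/\ lang_infinite A, lsubset A (lcompl C) &
      exists Q, [/\ L Q, L (lcompl Q), lsubset C Q & lsubset A (lcompl Q)]].

Definition ccore1 (X : finType) (C : lang X) (L : lfamily X) (B : lang X) : Prop :=
  [/\ lang_infinite B, lsubset B (lcompl C) &
      forall B', lsubset B' B -> lang_infinite B' -> ~ cclass1 C L B'].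

(* Main.v *)
Require Import Defs.
From Stdlib Require Import Classical ClassicalEpsilon.
From mathcomp Require Import all_boot.
Set Implicit Arguments. Unset Strict Implicit. Unset Printing Implicit Defensive.

Definition PR k (f : seq nat -> nat) := exists c, forall v, size v = k -> eval c v (f v).

Lemma PR_ext k f g : PR k f -> (forall v, size v = k -> f v = g v) -> PR k g.
Proof. by case=> c hc e; exists c => v hv; rewrite -e //; apply: hc. Qed.

Lemma PR_zero k : PR k (fun _ => 0).
Proof. by exists RZero => v _; constructor. Qed.

Lemma PR_proj k i : PR k (fun v => nth 0 v i).
Proof. by exists (RProj i) => v _; constructor. Qed.

Lemma PR_succ k f : PR k f -> PR k (fun v => (f v).+1).
Proof.
case=> c hc; exists (RComp RSucc [:: c]) => v hv.
apply: (@ev_comp _ _ _ [:: f v]); first by constructor; [apply: hc|constructor].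
exact: (ev_succ [:: f v]).
Qed.

Fixpoint PRs k (gs : seq (seq nat -> nat)) : Prop :=
  if gs is g :: gs' then PR k g /\ PRs k gs' else True.

Lemma PRs_codes k gs : PRs k gs ->
  exists cs, forall v, size v = k -> evals cs v (map (fun g => g v) gs).
Proof.
elim: gs => [|g gs IH] /=; first by exists [::] => v _; constructor.
case=> [[c hc] /IH [cs hcs]]; exists (c :: cs) => v hv; constructor; auto.
Qed.

Lemma PRs_map k (s : seq nat) (h : nat -> seq nat -> nat) :
  (forall j, PR k (h j)) -> PRs k (map h s).
Proof. by move=> H; elim: s => //= j s ->; split. Qed.

Lemma PR_comp k m F gs : PR m F -> PRs k gs -> size gs = m ->
  PR k (fun v => F (map (fun g => g v) gs)).
Proof.
case=> cF hF /PRs_codes [cs hcs] hs; exists (RComp cF cs) => v hv.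
apply: ev_comp; first exact: hcs.
by apply: hF; rewrite size_map.
Qed.

Fixpoint primrec (f g : seq nat -> nat) n v :=
  if n is n'.+1 then g (n' :: primrec f g n' v :: v) else f v.

Lemma PR_prim k f g : PR k f -> PR k.+2 g ->
  PR k.+1 (fun v => primrec f g (head 0 v) (behead v)).
Proof.
case=> cf hf [cg hg]; exists (RPrim cf cg) => [[|n v]] //= [hv].
elim: n => [|n IH] /=; first by constructor; apply: hf.
apply: ev_primS; first exact: IH.
by apply: hg => /=; rewrite hv.
Qed.

Lemma PR_pred : PR 1 (fun v => (head 0 v).-1).
Proof.
apply: PR_ext (PR_prim (PR_zero 0) (PR_proj 2 0)) _ => [[|n [|]]] //= _.
by case: n.
Qed.

Lemma PR_sub : PR 2 (fun v => nth 0 v 1 - nth 0 v 0).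
Proof.
have hg : PR 3 (fun v => (nth 0 v 1).-1).
  by apply: PR_ext (PR_comp PR_pred (PRs_map [:: 1] (fun j => PR_proj 3 j)) _) _.
apply: PR_ext (PR_prim (PR_proj 1 0) hg) _ => [[|b [|a [|]]]] //= _.
by elim: b => [|b /= ->]; rewrite ?subn0 ?subnS.
Qed.

Lemma PR_comp2 k F g1 g2 : PR 2 F -> PR k g1 -> PR k g2 ->
  PR k (fun v => F [:: g1 v; g2 v]).
Proof. move=> hF h1 h2; exact: (PR_comp hF (gs := [:: g1; g2])). Qed.

Lemma PR_comp1 k F g1 : PR 1 F -> PR k g1 -> PR k (fun v => F [:: g1 v]).
Proof. move=> hF h1; exact: (PR_comp hF (gs := [:: g1])). Qed.

Lemma PR_subf k f g : PR k f -> PR k g -> PR k (fun v => f v - g v).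
Proof. by move=> hf hg; apply: PR_ext (PR_comp2 PR_sub hg hf) _. Qed.

Lemma PR_one k : PR k (fun _ => 1).
Proof. exact: PR_succ (PR_zero k). Qed.

Definition PRb k (P : seq nat -> bool) := PR k (fun v => nat_of_bool (P v)).

Lemma PRb_ext k P Q : PRb k P -> (forall v, size v = k -> P v = Q v) -> PRb k Q.
Proof. by move=> h e; apply: PR_ext h _ => v /e ->. Qed.

Lemma PRb_not k P : PRb k P -> PRb k (fun v => ~~ P v).
Proof. by move=> h; apply: PR_ext (PR_subf (PR_one k) h) _ => v _; case: (P v). Qed.

Lemma PRb_and k P Q : PRb k P -> PRb k Q -> PRb k (fun v => P v && Q v).
Proof.
move=> hP hQ; apply: PR_ext (PR_subf hP (PRb_not hQ)) _ => v _.
by case: (P v); case: (Q v).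
Qed.

Lemma PRb_or k P Q : PRb k P -> PRb k Q -> PRb k (fun v => P v || Q v).
Proof.
move=> hP hQ; apply: PRb_ext (PRb_not (PRb_and (PRb_not hP) (PRb_not hQ))) _ => v _.
by case: (P v); case: (Q v).
Qed.

Lemma PRb_leq k f g : PR k f -> PR k g -> PRb k (fun v => f v <= g v).
Proof.
move=> hf hg; apply: PR_ext (PR_subf (PR_one k) (PR_subf hf hg)) _ => v _.
by case: leqP => [/eqP ->|]; [|rewrite -subn_gt0; case: (f v - g v)].
Qed.

Lemma PRb_comp k m P gs : PRb m P -> PRs k gs -> size gs = m ->
  PRb k (fun v => P (map (fun g => g v) gs)).
Proof. exact: PR_comp. Qed.

Lemma PRb_has k P : PRb k.+1 P ->
  PRb k.+1 (fun v => has (fun y => P (y :: behead v)) (iota 0 (head 0 v).+1)).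
Proof.
move=> hP.
have hf : PRb k (fun v => P (0 :: v)).
  apply: PRb_ext (PRb_comp hP (gs := (fun _ => 0) :: map (fun j v => nth 0 v j) (iota 0 k)) _ _) _.
  - by split; [apply: PR_zero| apply: PRs_map => j; apply: PR_proj].
  - by rewrite /= size_map size_iota.
  by move=> v hv /=; rewrite -map_comp /= -hv; have := mkseq_nth 0 v; rewrite /mkseq => ->.
have hg : PRb k.+2 (fun v => (0 < nth 0 v 1) || P ((nth 0 v 0).+1 :: drop 2 v)).
  apply: PRb_or; first exact: PRb_leq (PR_one _) (PR_proj _ _).
  apply: PRb_ext (PRb_comp hP (gs := (fun v => (nth 0 v 0).+1) :: map (fun j v => nth 0 v j.+2) (iota 0 k)) _ _) _.
  - by split; [apply: PR_succ; apply: PR_proj| apply: PRs_map => j; apply: PR_proj].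
  - by rewrite /= size_map size_iota.
  move=> [|n [|z v]] //= [hv]; rewrite -map_comp /=; congr (P (_ :: _)).
  by rewrite drop0 -{2}(mkseq_nth 0 v) hv /mkseq; apply: eq_map.
apply: PR_ext (PR_prim hf hg) _ => [[|m v]] //= _.
elim: m => [|m IH]; first by rewrite /= orbF.
have -> : iota 1 m.+1 = iota 1 m ++ [:: m.+1] by have := iotaD 1 m 1; rewrite addn1 add1n.
by rewrite [LHS]/= IH lt0b drop0 has_cat /= orbF orbA.
Qed.

Lemma PRb_all k P : PRb k.+1 P ->
  PRb k.+1 (fun v => all (fun y => P (y :: behead v)) (iota 0 (head 0 v).+1)).
Proof.
move=> hP; apply: PRb_ext (PRb_not (PRb_has (PRb_not hP))) _ => v _.
by elim: (iota _ _) => //= y s <-; rewrite negb_or negbK.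
Qed.

Lemma PRb_perm k m P (js : seq nat) : PRb m P -> size js = m ->
  PRb k (fun v => P (map (fun j => nth 0 v j) js)).
Proof.
move=> hP hs; apply: PRb_ext (PRb_comp hP (gs := map (fun j v => nth 0 v j) js) _ _) _.
- by apply: PRs_map => j; apply: PR_proj.
- by rewrite size_map.
by move=> v _; rewrite -map_comp.
Qed.

Lemma dm k r q : r < k -> (r + k * q) %% k = r /\ (r + k * q) %/ k = q.
Proof.
move=> h; have k0 : 0 < k by apply: leq_ltn_trans h.
rewrite addnC mulnC modnMDl modn_small // divnMDl // divn_small // addn0 //.
Qed.

Lemma wcode_inj (X : finType) : injective (@wcode X).
Proof.
elim=> [|x w1 IH] [|y w2] //=.
move/eqP; rewrite !addSn eqSS => /eqP E.
have [m1 d1] := dm (wcode w1) (ltn_ord (enum_rank x)).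
have [m2 d2] := dm (wcode w2) (ltn_ord (enum_rank y)).
have ex : enum_rank x = enum_rank y by apply: val_inj; rewrite /= -m1 E m2.
rewrite (enum_rank_inj ex) (IH w2) //.
by rewrite -d1 E d2.
Qed.

Lemma wcode_surj (X : finType) (hX : 0 < #|X|) n : exists w : seq X, wcode w = n.
Proof.
elim/ltn_ind: n => [[|m]] IH; first by exists [::].
have hr := ltn_pmod m hX.
have [w hw] := IH (m %/ #|X|) (leq_ltn_trans (leq_div m _) (ltnSn m)).
exists (enum_val (Ordinal hr) :: w) => /=.
by rewrite enum_valK /= hw addSn [in RHS](divn_eq m #|X|) mulnC addnC.
Qed.

Definition decode (X : finType) (hX : 0 < #|X|) n : seq X :=
  proj1_sig (constructive_indefinite_description _ (wcode_surj hX n)).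

Lemma decodeK (X : finType) (hX : 0 < #|X|) n : wcode (decode hX n) = n.
Proof. exact: proj2_sig (constructive_indefinite_description _ (wcode_surj hX n)). Qed.

Lemma codeK (X : finType) (hX : 0 < #|X|) w : decode hX (wcode w) = w.
Proof. by apply: (@wcode_inj X); rewrite decodeK. Qed.

Lemma inf_iff (X : finType) (hX : 0 < #|X|) (P : lang X) :
  lang_infinite P <-> forall N, exists w, P w /\ N <= wcode w.
Proof.
split.
  move=> hinf N; apply: NNPP => hno; apply: hinf.
  exists (map (decode hX) (iota 0 N)) => w Pw.
  have hw : wcode w < N by rewrite ltnNge; apply/negP => hle; apply: hno; exists w.
  by rewrite -(codeK hX w); apply: map_f; rewrite mem_iota.
move=> h [s hs]; have [w [Pw hw]] := h (sumn (map (@wcode X) s)).+1.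
have : wcode w <= sumn (map (@wcode X) s).
  move: (hs w Pw); elim: s {hs hw} => //= u s IH; rewrite in_cons => /orP [/eqP ->|/IH].
    exact: leq_addr.
  by move/leq_trans; apply; apply: leq_addl.
by rewrite leqNgt hw.
Qed.

Theorem theorem5p3 (X : finType) (hX : 0 < #|X|) (L : lfamily X)
  (hnt : nontrivial L) (hwp : WP_recursive L)
  (hU : closed_union L) (hI : closed_inter L) (hC : closed_compl L)
  (C A : lang X) (hCrec : recursive C) (hArec : recursive A)
  (hAinf : lang_infinite A) (hAC : forall w, A w -> ~~ C w)
  (hAnot : ~ cclass1 C L A) :
  exists B : lang X, [/\ recursive B, lsubset B A & ccore1 C L B].
Proof.
case: hwp => e [he [hsurj [ce hce]]].
case: hCrec => cc hcc; case: hArec => ca hca.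
case: hnt => hL0 hL1 hLfin.
pose dec := decode hX.
pose a x := A (dec x); pose c x := C (dec x); pose ee i x := e i (dec x).
pose G n x := a x && all (fun i => ee i x || has (fun y => c y && ~~ ee i y) (iota 0 x.+1)) (iota 0 n.+1).
pose Bn x := has (fun n => G n x && all (fun y => (n <= y) ==> (y < x) ==> ~~ G n y) (iota 0 x.+1)) (iota 0 x.+1).
have pa : PRb 1 (fun v => a (nth 0 v 0)).
  exists ca => [[|x [|]]] //= _; have := hca (dec x); by rewrite decodeK.
have pc : PRb 1 (fun v => c (nth 0 v 0)).
  exists cc => [[|x [|]]] //= _; have := hcc (dec x); by rewrite decodeK.
have pe : PRb 2 (fun v => ee (nth 0 v 0) (nth 0 v 1)).
  exists ce => [[|i [|x [|]]]] //= _; have := hce i (dec x); by rewrite decodeK.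
have pW : PRb 2 (fun v => c (nth 0 v 0) && ~~ ee (nth 0 v 1) (nth 0 v 0)).
  apply: PRb_and; first exact: (PRb_perm 2 pc (js := [:: 0])).
  by apply: PRb_not; exact: (PRb_perm 2 pe (js := [:: 1; 0])).
have pH : PRb 2 (fun v => has (fun y => c y && ~~ ee (nth 0 v 1) y) (iota 0 (nth 0 v 0).+1)).
  by apply: PRb_ext (PRb_has pW) _ => [[|m [|i [|]]]].
have pP : PRb 2 (fun v => ee (nth 0 v 0) (nth 0 v 1) ||
            has (fun y => c y && ~~ ee (nth 0 v 0) y) (iota 0 (nth 0 v 1).+1)).
  apply: PRb_or => //; exact: (PRb_perm 2 pH (js := [:: 1; 0])).
have pG : PRb 2 (fun v => G (nth 0 v 0) (nth 0 v 1)).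
  apply: PRb_ext (PRb_and (PRb_perm 2 pa (js := [:: 1]) _) (PRb_all pP)) _ => //.
  by move=> [|n [|x [|]]].
have pR : PRb 3 (fun v => (nth 0 v 1 <= nth 0 v 0) ==> (nth 0 v 0 < nth 0 v 2) ==>
                          ~~ G (nth 0 v 1) (nth 0 v 0)).
  apply: PRb_ext (PRb_or (PRb_not (PRb_leq (PR_proj 3 1) (PR_proj 3 0)))
           (PRb_or (PRb_not (PRb_leq (PR_succ (PR_proj 3 0)) (PR_proj 3 2)))
                   (PRb_not (PRb_perm 3 pG (js := [:: 1; 0]) _)))) _ => //.
  by move=> v _ /=; do 2 case: (_ <= _).
have pAll : PRb 2 (fun v => all (fun y => (nth 0 v 0 <= y) ==> (y < nth 0 v 1) ==>
                          ~~ G (nth 0 v 0) y) (iota 0 (nth 0 v 1).+1)).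
  apply: PRb_ext (PRb_perm 2 (PRb_all pR) (js := [:: 1; 0; 1]) _) _ => //.
have pS : PRb 2 (fun v => G (nth 0 v 0) (nth 0 v 1) && all (fun y => (nth 0 v 0 <= y) ==> (y < nth 0 v 1) ==>
                          ~~ G (nth 0 v 0) y) (iota 0 (nth 0 v 1).+1)) by apply: PRb_and.
have pB : PRb 1 (fun v => Bn (nth 0 v 0)).
  apply: PRb_ext (PRb_perm 1 (PRb_has pS) (js := [:: 0; 0]) _) _ => //.
have decK : forall x, wcode (dec x) = x by move=> x; apply: decodeK.
have cdK : forall w, dec (wcode w) = w by move=> w; apply: codeK.
have keyQ : forall n, exists Q, exists M, [/\ L Q, lsubset C Q &
    forall i, i < n -> (lsubset C (e i) -> lsubset Q (e i)) /\
      (~ lsubset C (e i) -> exists2 y, y <= M & c y && ~~ ee i y)].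
  elim=> [|n [Q [M [LQ CQ hQ]]]]; first by exists (fun _ => true), 0; split.
  case: (classic (lsubset C (e n))) => hn.
    exists (fun w => Q w && e n w), M; split; first exact: hI.
      by move=> w Cw; rewrite CQ // hn.
    move=> i; rewrite ltnS leq_eqVlt => /orP [/eqP ->|/hQ [h1 h2]].
      by split => // _ w /andP [].
    by split => // /h1 h w /andP [/h].
  have [w hw] : exists w, ~ (C w -> e n w).
    by apply: not_all_ex_not => h; apply: hn => w; apply: h.
  have Cw : C w by apply: NNPP => h; apply: hw => /h.
  have enw : ~~ e n w by apply/negP => h; apply: hw.
  exists Q, (maxn M (wcode w)); split => // i; rewrite ltnS leq_eqVlt => /orP [/eqP ->|/hQ [h1 h2]].
    split => // _; exists (wcode w); first exact: leq_maxr.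
    by rewrite /c /ee cdK Cw.
  split => // /h2 [y hy hy2]; exists y => //.
  exact: leq_trans hy (leq_maxl _ _).
have AQinf : forall Q, L Q -> lsubset C Q -> lang_infinite (fun w => A w && Q w).
  move=> Q LQ CQ [s hs]; apply: hAnot; split => //; try by move=> w /hAC.
  pose E := filter (fun u => ~~ C u) s.
  have LQ' := (hLfin Q LQ E).2.
  exists (fun w => Q w && (w \notin E)); split => //; first exact: hC.
    by move=> w Cw; rewrite CQ // mem_filter Cw.
  move=> w Aw; rewrite /lcompl mem_filter hAC //=.
  by case Qw: (Q w) => //=; rewrite hs ?Aw.
have exG : forall n N, exists x, N <= x /\ G n x.
  move=> n N; have [Q [M [LQ CQ hQ]]] := keyQ n.+1.
  have [w [/andP [Aw Qw] hw]] := (inf_iff hX _).1 (AQinf Q LQ CQ) (maxn N M).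
  exists (wcode w); split; first exact: leq_trans (leq_maxl _ _) hw.
  rewrite /G /a cdK Aw andTb; apply/allP => i; rewrite mem_iota /= add0n => hi.
  have [h1 h2] := hQ i hi.
  case: (classic (lsubset C (e i))) => hci.
    by rewrite /ee cdK (h1 hci).
  have [y hy hy2] := h2 hci.
  have hh : has (fun y => c y && ~~ ee i y) (iota 0 (wcode w).+1).
    apply/hasP; exists y => //.
    rewrite mem_iota add0n ltnS; apply: leq_trans hy _.
    exact: leq_trans (leq_maxr _ _) hw.
  by move: hh => /= ->; rewrite orbT.
have Bspec : forall x, Bn x -> exists n, [/\ n <= x, G n x &
      forall y, n <= y -> y < x -> ~~ G n y].
  move=> x /hasP [n]; rewrite mem_iota leq0n add0n ltnS => hn /andP [hG /allP hall].
  exists n; split => // y hny hyx.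
  have := hall y; rewrite mem_iota leq0n add0n ltnS (ltnW hyx) hny hyx; exact.
exists (fun w => Bn (wcode w)); split.
- case: pB => cB hcB; exists cB => w; exact: (hcB [:: wcode w] erefl).
- by move=> w /Bspec [n [_ /andP [hA _] _]]; move: hA; rewrite /a cdK.
split.
- apply/(inf_iff hX) => N.
  have exP : exists x, (N <= x) && G N x by have [x [h1 h2]] := exG N N; exists x; rewrite h1.
  case: (ex_minnP exP) => x /andP [hNx hGx] hmin.
  exists (dec x); rewrite decK; split => //.
  apply/hasP; exists N; first by rewrite mem_iota /= add0n ltnS.
  rewrite hGx andTb; apply/allP => y _; apply/implyP => hNy; apply/implyP => hyx.
  by apply/negP => hGy; have := hmin y; rewrite hNy hGy => /(_ isT); rewrite leqNgt hyx.
- by move=> w /Bspec [n [_ /andP [hA _] _]]; apply: hAC; move: hA; rewrite /a cdK.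
move=> B' hB' hB'inf [_ _ [Q [LQ _ CQ B'Q]]].
have [i ei] := hsurj Q LQ; subst Q.
have [M' hM'] : exists M', forall n, n < i -> exists2 z, z <= M' & (n <= z) && G n z.
  elim: i {hB'inf B'Q LQ CQ} => [|m [M hM]]; first by exists 0.
  have [z [hz1 hz2]] := exG m m.
  exists (maxn M z) => n; rewrite ltnS leq_eqVlt => /orP [/eqP ->|/hM [y hy1 hy2]].
    by exists z; [exact: leq_maxr | rewrite hz1].
  by exists y => //; exact: leq_trans hy1 (leq_maxl _ _).
have [w [B'w hw]] := (inf_iff hX _).1 hB'inf M'.+1.
have [n [hnx hGn hmin]] := Bspec _ (hB' w B'w).
have nQw := B'Q w B'w; move: nQw; rewrite /lcompl.
case: (ltnP n i) => hni.
  have [z hz /andP [hnz hGz]] := hM' n hni.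
  by have := hmin z hnz (leq_ltn_trans hz hw); rewrite hGz.
move: hGn => /andP [_ /allP /(_ i)]; rewrite mem_iota leq0n add0n ltnS => /(_ hni).
rewrite /ee cdK => /orP [-> //|/hasP [y _ /andP [cy]]].
by rewrite (CQ _ cy).
Qed.
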